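(* For a ring $R$, the following are equivalent: (1) $R$ is uniquely weakly $J$-clean; (2) $R/J(R)$ is semi Boolean and idempotents can be lifted uniquely weakly modulo $J(R)$.
   Context: All rings are associative with identity; $J(R)$ is the Jacobson radical and $Idem(R)$ the set of idempotents. $R$ is uniquely weakly $J$-clean if for every $x\in R$ there exists a unique $e\in Idem(R)$ with $x-e\in J(R)$ or $x+e\in J(R)$. A ring $A$ is semi Boolean if for every $x\in A$, $x^2=x$ or $x^2=-x$. Idempotents can be lifted uniquely weakly modulo an ideal $I$ if for every $x\in R$ with $x^2-x\in I$ there exists a unique $e\in Idem(R)$ with $x-e\in I$ or $x+e\in I$. *)

(* Defs.v *)
From HB Require Import structures.
From mathcomp Require Import all_boot all_order all_algebra.
Set Implicit Arguments. Unset Strict Implicit. Unset Printing Implicit Defensive.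
Import GRing.Theory.
Local Open Scope ring_scope.

Definition isUnit (R : pzRingType) (u : R) : Prop :=
  exists v : R, u * v = 1 /\ v * u = 1.

(* Jacobson radical J(R): x \in J(R) iff 1 - y x is a unit for every y. *)
Definition inJ (R : pzRingType) (x : R) : Prop :=
  forall y : R, isUnit (1 - y * x).

Definition idem (R : pzRingType) (e : R) : Prop := e * e = e.

Definition uniquely_weakly_J_clean (R : pzRingType) : Prop :=
  forall x : R, exists! e : R, idem e /\ (inJ (x - e) \/ inJ (x + e)).

(* R / J(R) is semi Boolean: every class [x] satisfies [x]^2 = [x] or
   [x]^2 = -[x], i.e. x^2 - x \in J(R) or x^2 + x \in J(R). *)
Definition quotJ_semi_Boolean (R : pzRingType) : Prop :=
  forall x : R, inJ (x * x - x) \/ inJ (x * x + x).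

Definition idem_lift_uniquely_weakly (R : pzRingType) (I : R -> Prop) : Prop :=
  forall x : R, I (x * x - x) ->
    exists! e : R, idem e /\ (I (x - e) \/ I (x + e)).

(* Main.v *)
Require Import Defs.
From HB Require Import structures.
From mathcomp Require Import all_boot all_order all_algebra.
Local Open Scope ring_scope.
Import GRing.Theory.

Section J.
Variable R : pzRingType.

Lemma unitM (a b : R) : isUnit a -> isUnit b -> isUnit (a * b).
Proof.
move=> [va [h1 h2]] [vb [h3 h4]]; exists (vb * va); split.
  by rewrite mulrA -(mulrA a) h3 mulr1 h1.
by rewrite mulrA -(mulrA vb) h2 mulr1 h4.
Qed.

Lemma fin1 (o X Y : R) : o + X + (-(X - Y) - Y) = o.
Proof. by rewrite opprB [Y - X]addrC !addrK. Qed.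

Lemma jacobson (a b : R) : isUnit (1 - b * a) -> isUnit (1 - a * b).
Proof.
move=> [v [h1 h2]]; exists (1 + a * v * b); split.
  have E : a * ((1 - b*a) * v) * b = a * b by rewrite h1 mulr1.
  move: E; rewrite ?mulrBl ?mulrBr ?mulrDr ?mulrDl ?mul1r ?mulr1 ?mulNr ?mulrN -?mulrA ?mulNr ?mulrN -?mulrA => E.
  by rewrite ?mulrBl ?mulrBr ?mulrDr ?mulrDl ?mul1r ?mulr1 ?mulNr ?mulrN -?mulrA ?mulNr ?mulrN -?mulrA -E subrK addrK.
have E : a * (v * (1 - b*a)) * b = a * b by rewrite h2 mulr1.
move: E; rewrite ?mulrBl ?mulrBr ?mulrDr ?mulrDl ?mul1r ?mulr1 ?mulNr ?mulrN -?mulrA ?mulNr ?mulrN -?mulrA => E.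
by rewrite ?mulrBl ?mulrBr ?mulrDr ?mulrDl ?mul1r ?mulr1 ?mulNr ?mulrN -?mulrA ?mulNr ?mulrN -?mulrA -{1}E subrK addrK.
Qed.

Lemma J0 : inJ (0 : R).
Proof. by move=> y; rewrite mulr0 subr0; exists 1; rewrite mulr1. Qed.

Lemma JN (x : R) : inJ x -> inJ (- x).
Proof. by move=> h y; rewrite mulrN -mulNr. Qed.

Lemma JMl (a x : R) : inJ x -> inJ (a * x).
Proof. by move=> h y; rewrite mulrA. Qed.

Lemma JMr (x a : R) : inJ x -> inJ (x * a).
Proof. by move=> h y; rewrite mulrA; apply: jacobson; rewrite mulrA. Qed.

Lemma JD (x y : R) : inJ x -> inJ y -> inJ (x + y).
Proof.
move=> hx hy z; have [v [h1 h2]] := hx z.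
have -> : 1 - z * (x + y) = (1 - z * x) * (1 - v * z * y).
  by rewrite mulrBr mulr1 !mulrA h1 mul1r mulrDr opprD addrA.
by apply: unitM; [exists v | apply: hy].
Qed.

Lemma JB (x y : R) : inJ x -> inJ y -> inJ (x - y).
Proof. by move=> hx hy; apply: JD => //; apply: JN. Qed.

Lemma Jeq (x y : R) : x = y -> inJ x -> inJ y.
Proof. by move=> ->. Qed.

Lemma Z1 (V : zmodType) (e a b c j : V) : e + a + (b + c) - (e + j) = a + b + c - j.
Proof. rewrite opprD !addrA; congr (_ - _); rewrite -!addrA addrC !addrA subrK //. Qed.
Lemma Z2 (V : zmodType) (a b c e j : V) : a - b - (c - e) + (j - e) = a - b - c + j.
Proof. rewrite opprB !addrA [_ + e - c]addrAC [_ + e + j]addrAC addrK //. Qed.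

Lemma semi1 (e j : R) : e * e = e -> inJ j -> inJ ((e + j) * (e + j) - (e + j)).
Proof.
move=> he hj; rewrite mulrDl !mulrDr he Z1.
apply: JB => //; apply: JD; [apply: JD|]; [apply: JMl|apply: JMr|apply: JMl] => //.
Qed.

Lemma semi2 (e j : R) : e * e = e -> inJ j -> inJ ((j - e) * (j - e) + (j - e)).
Proof.
move=> he hj; rewrite mulrBl !mulrBr he Z2.
apply: JD => //; apply: JB; [apply: JB|]; [apply: JMl|apply: JMr|apply: JMl] => //.
Qed.

End J.
Arguments JN {R x}.
Arguments Jeq {R x y}.

Theorem mainTheorem8 (R : pzRingType) :
  uniquely_weakly_J_clean R <->
  (quotJ_semi_Boolean R /\ idem_lift_uniquely_weakly (@inJ R)).
Proof.
split.
  move=> H; split; last by move=> x _; apply: H.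
  move=> x; have [e [[he [hj|hj]] _]] := H x.
    left; have -> : x = e + (x - e) by rewrite addrC subrK.
    exact: semi1.
  right; have -> : x = (x + e) - e by rewrite addrK.
  exact: semi2.
move=> [SB L] x; case: (SB x) => hx.
  exact: L.
have hy : inJ ((- x) * (- x) - (- x)) by rewrite mulrNN opprK.
have [e [[he hj] U]] := L _ hy.
exists e; split.
  split=> //; case: hj => hj.
    by right; apply: (Jeq _ (JN hj)); rewrite opprB opprK addrC.
  by left; apply: (Jeq _ (JN hj)); rewrite opprD opprK.
move=> e' [he' hj']; apply: U; split=> //.
case: hj' => hj'.
  by right; apply: (Jeq _ (JN hj')); rewrite opprB addrC.
by left; apply: (Jeq _ (JN hj')); rewrite opprD.
Qed.
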